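(* Let $M\in\mathbb N$, $\alpha\in\mathbb N$, and let $f$ be a polynomial of degree at most $M$. Then $$\int_0^\pi f(\cos\vartheta)\sin^\alpha\vartheta\,d\vartheta=\sum_{u=0}^M\chi_u\, f\!\left(\cos\frac{u\pi}{M}\right),$$ where $\chi_u=\epsilon_u\,\omega_u$ with $\epsilon_0=\epsilon_M=\tfrac12$, $\epsilon_u=1$ for $u=1,\dots,M-1$ (and $\epsilon_{2\mu}$ defined by the same rule), and $$\omega_u=\frac{\pi\,\alpha!}{2^{\alpha-1}M}\sum_{\mu=0}^{\lfloor M/2\rfloor}\frac{\epsilon_{2\mu}(-1)^{\mu}\cos\frac{2\mu u\pi}{M}}{\Gamma\left(\frac{\alpha}{2}-\mu+1\right)\Gamma\left(\frac{\alpha}{2}+\mu+1\right)},$$ where a summand is understood to be $0$ whenever $\frac{\alpha}{2}-\mu+1$ is a non-positive integer (i.e. $1/\Gamma$ is taken to be $0$ at the poles of $\Gamma$).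
   Context: $\Gamma$ denotes the Euler Gamma function and $\lfloor\cdot\rfloor$ the integer part. *)

(* Defs.v *)
From Stdlib Require Import Reals List Factorial.
From Coquelicot Require Import Coquelicot.
Open Scope R_scope.

Definition Gamma_pos (x : R) : R :=
  RInt_gen (fun t => Rpower t (x - 1) * exp (- t)) (at_right 0) (Rbar_locally p_infty).

(* Reciprocal Gamma function 1/Gamma(x) on all of R, via the functional equation
   Gamma(x) = Gamma(x+n) / (x (x+1) ... (x+n-1)) with n chosen so that x + n > 0.
   At the poles x = 0, -1, -2, ... the product vanishes, so rgamma x = 0 there,
   which is exactly the convention "1/Gamma := 0 at the poles". *)
Definition rgamma_shift (x : R) : nat := Z.to_nat (up (- x)).
Definition rgamma (x : R) : R :=
  let n := rgamma_shift x in
  (fold_right Rmult 1 (map (fun k => x + INR k) (seq 0 n))) / Gamma_pos (x + INR n).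

Definition eps (M u : nat) : R :=
  if orb (Nat.eqb u 0) (Nat.eqb u M) then / 2 else 1.

Definition omega (M alpha u : nat) : R :=
  PI * INR (fact alpha) / (powerRZ 2 (Z.of_nat alpha - 1) * INR M) *
  sum_f_R0 (fun mu =>
      eps M (2 * mu) * (-1) ^ mu * cos (INR (2 * mu * u) * PI / INR M)
      * rgamma (INR alpha / 2 - INR mu + 1) * rgamma (INR alpha / 2 + INR mu + 1))
    (Nat.div M 2).

Definition chi (M alpha u : nat) : R := eps M u * omega M alpha u.

Definition poly_eval (a : nat -> R) (M : nat) (x : R) : R :=
  sum_f_R0 (fun k => a k * x ^ k) M.

(* Main.v *)
Require Import Defs.
From Stdlib Require Import Reals Lra Lia List ZArith.
From Coquelicot Require Import Coquelicot.
Open Scope R_scope.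

Lemma cont_of_der (f : R -> R) x : ex_derive f x -> continuous f x.
Proof. intros H. apply (@ex_derive_continuous R_AbsRing R_NormedModule f x H). Qed.

Lemma is_derive_eq (f : R -> R) x l l' : is_derive f x l -> l = l' -> is_derive f x l'.
Proof. intros H ->; exact H. Qed.

Lemma lim_opp0 {F : (R -> Prop) -> Prop} {FF : Filter F} (g : R -> R) :
  filterlim g F (locally 0) -> filterlim (fun t => - g t) F (locally 0).
Proof.
  intros H. replace (locally 0) with (locally (- 0)) by (f_equal; ring).
  apply (filterlim_comp _ _ _ g Ropp _ (locally 0)); auto. apply (filterlim_opp 0).
Qed.

Lemma gen_of_prim (f F : R -> R) (la lb : R) :
  (forall a b, 0 < a -> 0 < b -> is_RInt f a b (F b - F a)) ->
  filterlim F (at_right 0) (locally la) ->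
  filterlim F (Rbar_locally p_infty) (locally lb) ->
  is_RInt_gen f (at_right 0) (Rbar_locally p_infty) (lb - la).
Proof.
  intros Hf Ha Hb P [eps HP].
  pose proof (proj1 (filterlim_locally _ _) Ha (pos_div_2 eps)) as Ha'.
  pose proof (proj1 (filterlim_locally _ _) Hb (pos_div_2 eps)) as Hb'.
  destruct Hb' as [M HM].
  apply (Filter_prod _ _ _ (fun a => 0 < a /\ ball la (pos_div_2 eps) (F a))
                           (fun b => Rmax M 0 < b)).
  - unfold at_right, within in *. destruct Ha' as [d Hd].
    exists d. intros y Hy H0. split; auto.
  - exists (Rmax M 0). auto.
  - intros a b [Ha0 Hab] Hbb. simpl. exists (F b - F a). split.
    + apply Hf; auto. pose proof (Rmax_r M 0); lra.
    + apply HP. assert (M < b) by (pose proof (Rmax_l M 0); lra).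
      specialize (HM b H). revert Hab HM. unfold ball; simpl; unfold AbsRing_ball; simpl.
      unfold abs, minus, plus, opp; simpl. intros H1 H2.
      replace (F b - F a + - (lb - la)) with ((F b + - lb) - (F a + - la)) by ring.
      eapply Rle_lt_trans. apply Rabs_triang. rewrite Rabs_Ropp. simpl in *. lra.
Qed.

Lemma lim_inf_of (f : R -> R) (l : R) :
  (forall eps, 0 < eps -> exists M, forall t, M < t -> Rabs (f t - l) < eps) ->
  filterlim f (Rbar_locally p_infty) (locally l).
Proof.
  intros H. apply filterlim_locally. intros eps.
  destruct (H eps (cond_pos eps)) as [M HM]. exists M. intros t Ht.
  apply HM; auto.
Qed.

Lemma lim_right_of (f : R -> R) (l : R) :
  (forall eps, 0 < eps -> exists d, 0 < d /\ forall t, 0 < t < d -> Rabs (f t - l) < eps) ->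
  filterlim f (at_right 0) (locally l).
Proof.
  intros H. apply filterlim_locally. intros eps.
  destruct (H eps (cond_pos eps)) as [d [Hd HM]]. exists (mkposreal d Hd).
  intros t Ht H0. apply HM. split; auto.
  unfold ball in Ht; simpl in Ht; unfold AbsRing_ball, abs, minus, plus, opp in Ht; simpl in Ht.
  rewrite Ropp_0, Rplus_0_r in Ht. apply Rabs_def2 in Ht. lra.
Qed.

Lemma ln_lt_self y : 0 < y -> ln y < y.
Proof.
  intros Hy. rewrite <- (ln_exp y) at 2. apply ln_increasing; [exact Hy|].
  assert (Hy0 : y <> 0) by lra. pose proof (exp_ineq1 y Hy0). lra.
Qed.

Lemma ln_lt_2sqrt t : 0 < t -> ln t < 2 * sqrt t.
Proof.
  intros Ht. assert (Hs : 0 < sqrt t) by (apply sqrt_lt_R0; auto).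
  replace t with (sqrt t * sqrt t) at 1 by (apply sqrt_sqrt; lra).
  rewrite ln_mult; auto. pose proof (ln_lt_self _ Hs). lra.
Qed.

Lemma Rpower_exp_lim_inf x : 0 < x ->
  filterlim (fun t => Rpower t x * exp (- t)) (Rbar_locally p_infty) (locally 0).
Proof.
  intros Hx. apply lim_inf_of. intros eps Heps.
  set (L := Rabs (ln eps)).
  exists ((2 * x + L + 1) ^ 2). intros t Ht.
  assert (H0 : 0 <= L) by apply Rabs_pos.
  assert (Ht0 : 0 < t) by (assert (0 < (2 * x + L + 1) ^ 2) by (apply pow_lt; lra); lra).
  assert (Hs : 2 * x + L + 1 < sqrt t).
  { rewrite <- (sqrt_pow2 (2 * x + L + 1)) by lra. apply sqrt_lt_1_alt. split; auto.
    apply pow2_ge_0. }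
  rewrite Rminus_0_r. unfold Rpower. rewrite <- exp_plus.
  rewrite Rabs_pos_eq by (left; apply exp_pos).
  rewrite <- (exp_ln eps) by auto. apply exp_increasing.
  pose proof (ln_lt_2sqrt t Ht0).
  assert (x * ln t < x * (2 * sqrt t)) by (apply Rmult_lt_compat_l; auto).
  assert (Hss : sqrt t * sqrt t = t) by (apply sqrt_sqrt; lra).
  assert (- L <= ln eps) by (unfold L; pose proof (Rabs_pos (ln eps)); destruct (Rle_dec 0 (ln eps)); [rewrite Rabs_pos_eq; lra | rewrite Rabs_left; lra]).
  assert (sqrt t * (sqrt t - 2 * x) > 1 * (L + 1)).
  { apply Rmult_gt_0_lt_compat; lra. }
  nra.
Qed.

Lemma Rpower_lim_right x : 0 < x ->
  filterlim (fun t => Rpower t x * exp (- t)) (at_right 0) (locally 0).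
Proof.
  intros Hx. apply lim_right_of. intros eps Heps.
  exists (Rmin 1 (exp (ln eps / x))). split.
  { apply Rmin_pos; [lra | apply exp_pos]. }
  intros t [Ht1 Ht2]. rewrite Rminus_0_r.
  unfold Rpower. rewrite Rabs_pos_eq by (left; apply Rmult_lt_0_compat; apply exp_pos).
  assert (exp (- t) < 1) by (rewrite <- exp_0; apply exp_increasing; lra).
  assert (exp (x * ln t) < eps).
  { rewrite <- (exp_ln eps) by auto. apply exp_increasing.
    assert (ln t < ln eps / x).
    { rewrite <- (ln_exp (ln eps / x)). apply ln_increasing; auto.
      pose proof (Rmin_r 1 (exp (ln eps / x))). lra. }
    apply Rmult_lt_compat_l with (r := x) in H0; auto.
    replace (x * (ln eps / x)) with (ln eps) in H0 by (field; lra). auto. }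
  pose proof (exp_pos (x * ln t)). pose proof (exp_pos (-t)). nra.
Qed.

Definition fG (x t : R) : R := Rpower t (x - 1) * exp (- t).

Lemma Gamma1_is : is_RInt_gen (fG 1) (at_right 0) (Rbar_locally p_infty) 1.
Proof.
  replace 1 with (0 - (-1)) at 2 by ring.
  apply gen_of_prim with (F := fun t => - exp (- t)).
  - intros a b Ha Hb.
    apply is_RInt_ext with (f := fun t => exp (- t)).
    { intros x Hxx. assert (0 < x) by (pose proof (Rmin_l a b); pose proof (Rmin_r a b); destruct (Rle_dec a b); [rewrite Rmin_left in Hxx|rewrite Rmin_right in Hxx]; lra).
      unfold fG. replace (1 - 1) with 0 by ring. rewrite Rpower_O by auto. symmetry; apply Rmult_1_l. }
    apply (is_RInt_derive (fun t => - exp (- t))).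
    + intros x _. auto_derive; auto. ring.
    + intros x _. apply cont_of_der. auto_derive. auto.
  - apply (filterlim_filter_le_1 (F := locally 0)). { apply filter_le_within. }
    replace (-1) with (- exp (- 0)) by (rewrite Ropp_0, exp_0; ring).
    apply (cont_of_der (fun t => - exp (- t)) 0). auto_derive; auto.
  - apply lim_inf_of. intros eps Heps. exists (Rabs (ln eps)). intros t Ht.
    rewrite Rminus_0_r, Rabs_Ropp, Rabs_pos_eq by (left; apply exp_pos).
    rewrite <- (exp_ln eps) by auto. apply exp_increasing.
    pose proof (Rle_abs (- ln eps)). rewrite Rabs_Ropp in H. lra.
Qed.

Lemma Gamma_step x l : 0 < x ->
  is_RInt_gen (fG x) (at_right 0) (Rbar_locally p_infty) l ->
  is_RInt_gen (fG (x + 1)) (at_right 0) (Rbar_locally p_infty) (x * l).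
Proof.
  intros Hx Hl.
  set (H := fun t => - (Rpower t x * exp (- t))).
  set (dH := fun t => - (x * Rpower t (x - 1) * exp (- t)) + Rpower t x * exp (- t)).
  assert (HdH : is_RInt_gen dH (at_right 0) (Rbar_locally p_infty) (0 - 0)).
  { apply gen_of_prim with (F := H).
    - intros a b Ha Hb. apply (is_RInt_derive H dH).
      + intros y Hy. assert (0 < y) by (pose proof (Rmin_glb_lt a b 0); pose proof (Rmin_l a b); pose proof (Rmin_r a b); destruct (Rle_dec a b); lra).
        assert (D1 : is_derive (fun t => Rpower t x) y (x * Rpower y (x - 1))).
        { apply is_derive_Reals. apply derivable_pt_lim_power; auto. }
        assert (D2 : is_derive (fun t => exp (- t)) y (- exp (- y))).
        { auto_derive; auto. ring. }
        pose proof (is_derive_mult _ _ _ _ _ D1 D2 (fun a b => Rmult_comm a b)) as D3.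
        pose proof (is_derive_opp _ _ _ D3) as D4.
        unfold H, dH. simpl in D4. unfold mult, plus, opp in D4; simpl in D4.
        replace (- (x * Rpower y (x - 1) * exp (- y)) + Rpower y x * exp (- y))
          with (- (x * Rpower y (x - 1) * exp (- y) + Rpower y x * - exp (- y))) by ring.
        exact D4.
      + intros y Hy. assert (0 < y) by (pose proof (Rmin_glb_lt a b 0); pose proof (Rmin_l a b); pose proof (Rmin_r a b); destruct (Rle_dec a b); lra).
        apply cont_of_der. unfold dH, Rpower. auto_derive. repeat split; auto.
    - unfold H. apply lim_opp0. apply Rpower_lim_right; auto.
    - unfold H. apply lim_opp0. apply Rpower_exp_lim_inf; auto. }
  pose proof (is_RInt_gen_scal _ x _ Hl) as Hs.
  pose proof (is_RInt_gen_plus _ _ _ _ HdH Hs) as Hp.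
  replace (x * l) with (plus (0 - 0) (scal x l)) by (unfold plus, scal; simpl; unfold mult; simpl; ring).
  eapply is_RInt_gen_ext; [ | exact Hp].
  apply (Filter_prod _ _ _ (fun a => 0 < a) (fun b => 0 < b)).
  - exists (mkposreal 1 Rlt_0_1). intros; auto.
  - exists 0. intros; auto.
  - intros a b Ha Hb y Hy. simpl in Hy.
    assert (0 < y) by (pose proof (Rmin_glb_lt a b 0); pose proof (Rmin_l a b); pose proof (Rmin_r a b); destruct (Rle_dec a b); lra).
    unfold dH, fG, plus, scal; simpl; unfold mult; simpl.
    assert (E1 : Rpower y (x + 1 - 1) = Rpower y x) by (f_equal; ring).
    assert (E2 : Rpower y x = y * Rpower y (x - 1)).
    { replace x with (1 + (x - 1)) at 1 by ring. rewrite Rpower_plus, Rpower_1 by auto. auto. }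
    rewrite E1. rewrite E2. ring.
Qed.

Lemma exRc (f : R -> R) a b : (forall z, Rmin a b <= z <= Rmax a b -> continuous f z) -> ex_RInt f a b.
Proof. apply (@ex_RInt_continuous R_CompleteNormedModule). Qed.

Definition gs (t : R) : R := exp (- (t * t)).
Definition Gg (x : R) : R := RInt gs 0 x.
Definition gk (u t : R) : R := exp (- (u * u) * (1 + t * t)) / (1 + t * t).
Definition gU (x : R) : R := RInt (gk x) 0 1.

Lemma gs_cont x : continuous gs x.
Proof. apply cont_of_der. unfold gs. auto_derive. auto. Qed.

Lemma gs_ex a b : ex_RInt gs a b.
Proof. apply exRc. intros; apply gs_cont. Qed.

Lemma Gg_deriv x : is_derive Gg x (gs x).
Proof.
  apply (is_derive_RInt gs Gg 0 x).
  - apply filter_forall. intros b. unfold Gg. apply (@RInt_correct R_CompleteNormedModule). apply gs_ex.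
  - apply gs_cont.
Qed.

Lemma opt_pos t : 0 < 1 + t * t.
Proof. pose proof (Rle_0_sqr t). unfold Rsqr in H. lra. Qed.

Lemma gk_ex u a b : ex_RInt (gk u) a b.
Proof.
  apply exRc. intros z _. apply cont_of_der. unfold gk. auto_derive.
  pose proof (opt_pos z). lra.
Qed.

Lemma gk_derive u v : Derive (fun z => gk z v) u = - 2 * u * exp (- (u * u) * (1 + v * v)).
Proof.
  apply is_derive_unique. unfold gk. pose proof (opt_pos v).
  auto_derive. lra. field. lra.
Qed.

Lemma gU_deriv x : is_derive gU x (- 2 * gs x * Gg x).
Proof.
  assert (H := is_derive_RInt_param gk 0 1 x).
  assert (H1 : locally x (fun x0 => forall t, Rmin 0 1 <= t <= Rmax 0 1 -> ex_derive (fun u => gk u t) x0)).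
  { apply filter_forall. intros x0 t _. unfold gk. pose proof (opt_pos t). auto_derive. lra. }
  assert (H2 : forall t, Rmin 0 1 <= t <= Rmax 0 1 ->
     continuity_2d_pt (fun u v => Derive (fun z => gk z v) u) x t).
  { intros t _.
    apply continuity_2d_pt_ext with (f := fun u v => - 2 * u * exp (- (u * u) * (1 + v * v))).
    { intros; rewrite gk_derive; auto. }
    apply continuity_2d_pt_mult.
    - apply continuity_2d_pt_mult. apply continuity_2d_pt_const. apply continuity_2d_pt_id1.
    - apply continuity_1d_2d_pt_comp with (f := exp).
      + apply derivable_continuous_pt. apply derivable_pt_exp.
      + apply continuity_2d_pt_mult.
        * apply continuity_2d_pt_opp. apply continuity_2d_pt_mult; apply continuity_2d_pt_id1.
        * apply continuity_2d_pt_plus. apply continuity_2d_pt_const.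
          apply continuity_2d_pt_mult; apply continuity_2d_pt_id2. }
  assert (H3 : locally x (fun y => ex_RInt (fun t => gk y t) 0 1)).
  { apply filter_forall. intros; apply gk_ex. }
  specialize (H H1 H2 H3).
  unfold gU. eapply is_derive_eq. exact H.
  rewrite (RInt_ext _ (fun t => scal x ((fun s => -2 * gs x * gs s) (x * t + 0)))).
  2:{ intros t _. rewrite gk_derive. unfold scal; simpl; unfold mult; simpl.
      unfold gs. replace (- (x * x) * (1 + t * t)) with (- (x * x) + - ((x * t + 0) * (x * t + 0))) by ring.
      rewrite exp_plus. ring. }
  etransitivity.
  { apply (RInt_comp_lin (V := R_CompleteNormedModule) (fun s => -2 * gs x * gs s) x 0 0 1).
    apply exRc. intros; apply cont_of_der. unfold gs; auto_derive; auto. }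
  rewrite Rmult_0_r, Rmult_1_r, !Rplus_0_r.
  rewrite (RInt_ext _ (fun s => scal (-2 * gs x) (gs s))).
  2:{ intros; reflexivity. }
  etransitivity. { apply (RInt_scal (V := R_CompleteNormedModule)). apply gs_ex. }
  reflexivity.
Qed.

Lemma gU0 : gU 0 = PI / 4.
Proof.
  unfold gU. rewrite (RInt_ext _ (fun t => / (1 + t ^ 2))).
  2:{ intros t _. unfold gk. replace (- (0 * 0) * (1 + t * t)) with 0 by ring. rewrite exp_0.
      unfold Rdiv. rewrite Rmult_1_l. f_equal. ring. }
  rewrite <- atan_1. replace (atan 1) with (atan 1 - atan 0) by (rewrite atan_0; ring).
  apply is_RInt_unique. apply (is_RInt_derive atan).
  - intros x _. apply is_derive_Reals. apply derivable_pt_lim_atan.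
  - intros x _. apply cont_of_der. auto_derive. pose proof (opt_pos x). lra.
Qed.

Lemma h_const x : Gg x * Gg x + gU x = PI / 4.
Proof.
  set (h := fun y => Gg y * Gg y + gU y).
  assert (Hd : forall y, is_derive h y 0).
  { intros y. unfold h. eapply is_derive_eq.
    apply (is_derive_plus (fun y => Gg y * Gg y) gU).
    apply (is_derive_mult Gg Gg). apply Gg_deriv. apply Gg_deriv.
    intros; apply Rmult_comm. apply gU_deriv.
    unfold plus, mult; simpl. ring. }
  assert (HI := is_RInt_derive h (fun _ => 0) 0 x (fun y _ => Hd y)
                 (fun y _ => continuous_const 0 y)).
  pose proof (is_RInt_const 0 x 0) as HC.
  pose proof (is_RInt_unique _ _ _ _ HI) as E1.
  pose proof (is_RInt_unique _ _ _ _ HC) as E2.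
  rewrite E1 in E2. unfold minus, plus, opp, scal in E2; simpl in E2. unfold mult in E2; simpl in E2.
  assert (h 0 = PI / 4).
  { unfold h, Gg. rewrite RInt_point. rewrite gU0. unfold zero; simpl. ring. }
  change (h x = PI / 4). lra.
Qed.

Lemma gU_bounds x : 0 <= gU x <= exp (- (x * x)).
Proof.
  unfold gU. split.
  - apply RInt_ge_0. lra. apply gk_ex. intros t _. unfold gk. left.
    apply Rdiv_lt_0_compat. apply exp_pos. apply opt_pos.
  - replace (exp (- (x * x))) with (RInt (fun _ => exp (- (x * x))) 0 1).
    2:{ rewrite RInt_const. unfold scal; simpl; unfold mult; simpl. ring. }
    apply RInt_le. lra. apply gk_ex. apply exRc. intros; apply continuous_const.
    intros t Ht. unfold gk. pose proof (opt_pos t).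
    apply Rle_trans with (exp (- (x * x) * (1 + t * t))).
    + unfold Rdiv. rewrite <- (Rmult_1_r (exp _)) at 2. apply Rmult_le_compat_l.
      left; apply exp_pos. rewrite <- Rinv_1. apply Rinv_le_contravar. lra.
      pose proof (Rle_0_sqr t). unfold Rsqr in H0. lra.
    + destruct (Req_dec (x * x * (t * t)) 0) as [E|E].
      * right. f_equal. nra.
      * left. apply exp_increasing. pose proof (Rle_0_sqr x). pose proof (Rle_0_sqr t).
        unfold Rsqr in *. assert (0 <= x * x * (t * t)) by (apply Rmult_le_pos; auto). nra.
Qed.

Lemma gU_lim : filterlim gU (Rbar_locally p_infty) (locally 0).
Proof.
  apply lim_inf_of. intros eps Heps. exists (Rabs (ln eps) + 1). intros t Ht.
  pose proof (gU_bounds t). rewrite Rminus_0_r, Rabs_pos_eq by lra.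
  apply Rle_lt_trans with (exp (- (t * t))). lra.
  rewrite <- (exp_ln eps) by auto. apply exp_increasing.
  pose proof (Rle_abs (- ln eps)). rewrite Rabs_Ropp in H0.
  pose proof (Rabs_pos (ln eps)). nra.
Qed.

Lemma Gg_nonneg x : 0 <= x -> 0 <= Gg x.
Proof. intros Hx. unfold Gg. apply RInt_ge_0; auto. apply gs_ex. intros; left; apply exp_pos. Qed.

Lemma PI4_pos : 0 < PI / 4.
Proof. pose proof PI_RGT_0. lra. Qed.

Lemma Gg_lim : filterlim Gg (Rbar_locally p_infty) (locally (sqrt PI / 2)).
Proof.
  apply filterlim_ext_loc with (f := fun x => sqrt (PI / 4 - gU x)).
  { exists 0. intros x Hx. rewrite <- (h_const x). replace (Gg x * Gg x + gU x - gU x) with (Gg x * Gg x) by ring.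
    apply sqrt_square. apply Gg_nonneg. lra. }
  replace (sqrt PI / 2) with (sqrt (PI / 4 - 0)).
  2:{ rewrite Rminus_0_r. replace (PI / 4) with (PI * / (2 * 2)) by field.
      rewrite sqrt_mult_alt by (pose proof PI_RGT_0; lra). rewrite sqrt_inv.
      rewrite sqrt_square by lra. reflexivity. }
  apply (filterlim_comp _ _ _ (fun x => PI / 4 - gU x) sqrt _ (locally (PI / 4 - 0))).
  - apply (filterlim_comp _ _ _ gU (fun u => PI / 4 - u) _ (locally 0)).
    apply gU_lim. apply (cont_of_der (fun u => PI / 4 - u) 0). auto_derive; auto.
  - apply (cont_of_der sqrt). auto_derive. pose proof PI4_pos. lra.
Qed.

Lemma sqrt_lim_inf : filterlim sqrt (Rbar_locally p_infty) (Rbar_locally p_infty).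
Proof.
  intros P [M HM]. exists (Rabs M * Rabs M). intros t Ht. apply HM.
  pose proof (Rabs_pos M). pose proof (Rle_abs M).
  apply Rle_lt_trans with (Rabs M); auto.
  rewrite <- (sqrt_square (Rabs M)) by auto. apply sqrt_lt_1_alt. split; auto.
  apply Rmult_le_pos; auto.
Qed.

Lemma Gamma_half_is : is_RInt_gen (fG (/ 2)) (at_right 0) (Rbar_locally p_infty) (sqrt PI).
Proof.
  replace (sqrt PI) with (sqrt PI - 0) by ring.
  apply gen_of_prim with (F := fun t => 2 * Gg (sqrt t)).
  - intros a b Ha Hb. apply (is_RInt_derive (fun t => 2 * Gg (sqrt t)) (fG (/ 2))).
    + intros y Hy. assert (0 < y) by (pose proof (Rmin_l a b); pose proof (Rmin_r a b); destruct (Rle_dec a b); [rewrite Rmin_left in Hy|rewrite Rmin_right in Hy]; lra).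
      assert (Hs : 0 < sqrt y) by (apply sqrt_lt_R0; auto).
      eapply is_derive_eq.
      { apply is_derive_scal. apply (is_derive_comp Gg sqrt). apply Gg_deriv.
        apply (is_derive_sqrt (fun t => t) y 1). apply (is_derive_id y). auto. }
      unfold scal; simpl; unfold mult; simpl. unfold fG, gs.
      rewrite sqrt_sqrt by lra.
      replace (/ 2 - 1) with (- (/ 2)) by field. rewrite Rpower_Ropp, Rpower_sqrt by auto.
      field. lra.
    + intros y Hy. assert (0 < y) by (pose proof (Rmin_l a b); pose proof (Rmin_r a b); destruct (Rle_dec a b); [rewrite Rmin_left in Hy|rewrite Rmin_right in Hy]; lra).
      apply cont_of_der. unfold fG, Rpower. auto_derive. auto.
  - replace 0 with (2 * Gg (sqrt 0)) at 2.
    2:{ rewrite sqrt_0. unfold Gg. rewrite RInt_point. unfold zero; simpl. ring. }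
    apply (filterlim_comp _ _ _ sqrt (fun s => 2 * Gg s) _ (locally (sqrt 0))).
    + apply (filterlim_filter_le_1 (F := locally 0)). { apply filter_le_within. }
      apply continuity_pt_filterlim. apply continuity_pt_sqrt. lra.
    + apply (cont_of_der (fun s => 2 * Gg s)). eexists. apply is_derive_scal. apply Gg_deriv.
  - replace (sqrt PI) with (2 * (sqrt PI / 2)) by field.
    apply (filterlim_comp _ _ _ sqrt (fun s => 2 * Gg s) _ (Rbar_locally p_infty)).
    + apply sqrt_lim_inf.
    + apply (filterlim_comp _ _ _ Gg (fun s => 2 * s) _ (locally (sqrt PI / 2))).
      apply Gg_lim. apply (cont_of_der (fun s => 2 * s)). auto_derive. auto.
Qed.

Definition Gok (x : R) : Prop :=
  is_RInt_gen (fG x) (at_right 0) (Rbar_locally p_infty) (Gamma_pos x).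

Lemma Gamma_pos_eq x l : is_RInt_gen (fG x) (at_right 0) (Rbar_locally p_infty) l -> Gamma_pos x = l.
Proof.
  intros H. unfold Gamma_pos.
  apply (is_RInt_gen_unique (V := R_CompleteNormedModule) (fG x)). exact H.
Qed.

Lemma Gok_of x l : is_RInt_gen (fG x) (at_right 0) (Rbar_locally p_infty) l -> Gok x.
Proof. intros H. unfold Gok. rewrite (Gamma_pos_eq x l H). exact H. Qed.

Lemma Gok_step x : 0 < x -> Gok x -> Gok (x + 1) /\ Gamma_pos (x + 1) = x * Gamma_pos x.
Proof.
  intros Hx H. pose proof (Gamma_step x _ Hx H) as H1. split.
  - eapply Gok_of; eauto.
  - apply Gamma_pos_eq; auto.
Qed.

Lemma Gok_half m : Gok (INR (S m) / 2).
Proof.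
  assert (forall m, Gok (INR (S m) / 2) /\ Gok (INR (S (S m)) / 2)).
  { induction m0.
    - split.
      + replace (INR 1 / 2) with (/ 2) by (simpl; field). eapply Gok_of. apply Gamma_half_is.
      + replace (INR 2 / 2) with 1 by (simpl; field). eapply Gok_of. apply Gamma1_is.
    - destruct IHm0 as [H1 H2]. split; [exact H2|].
      replace (INR (S (S (S m0))) / 2) with (INR (S m0) / 2 + 1) by (rewrite !S_INR; field).
      assert (Hp : 0 < INR (S m0) / 2) by (apply Rdiv_lt_0_compat; [apply lt_0_INR; lia | lra]).
      exact (proj1 (Gok_step _ Hp H1)). }
  exact (proj1 (H m)).
Qed.

Lemma Gamma_feq_half m : Gamma_pos (INR (S m) / 2 + 1) = INR (S m) / 2 * Gamma_pos (INR (S m) / 2).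
Proof.
  assert (Hp : 0 < INR (S m) / 2) by (apply Rdiv_lt_0_compat; [apply lt_0_INR; lia | lra]).
  exact (proj2 (Gok_step _ Hp (Gok_half m))).
Qed.

Lemma rgamma_pos x : 0 < x -> rgamma x = / Gamma_pos x.
Proof.
  intros Hx. unfold rgamma, rgamma_shift.
  destruct (archimed (- x)) as [A1 A2].
  assert (Hu : (up (- x) <= 0)%Z).
  { destruct (Z_le_gt_dec (up (- x)) 0); auto.
    assert (1 <= IZR (up (- x))) by (apply IZR_le; lia). lra. }
  replace (Z.to_nat (up (- x))) with 0%nat by lia.
  cbn [seq map fold_right]. change (INR 0) with 0. rewrite Rplus_0_r. unfold Rdiv. ring.
Qed.

Lemma rgamma_feq_nonpos x : x <= 0 -> rgamma x = x * rgamma (x + 1).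
Proof.
  intros Hx. unfold rgamma, rgamma_shift.
  destruct (archimed (- x)) as [A1 A2].
  set (u := up (- x)) in *.
  assert (Hu : (1 <= u)%Z).
  { assert (0 < IZR u) by lra. apply lt_IZR in H. lia. }
  assert (Hu2 : up (- (x + 1)) = (u - 1)%Z).
  { symmetry. apply tech_up; rewrite minus_IZR; simpl; lra. }
  rewrite Hu2.
  replace (Z.to_nat u) with (S (Z.to_nat (u - 1))) by lia.
  set (m := Z.to_nat (u - 1)).
  cbn [seq map fold_right]. rewrite <- seq_shift, map_map.
  rewrite (map_ext (fun x0 => x + INR (S x0)) (fun k => x + 1 + INR k)).
  2:{ intros; rewrite S_INR; ring. }
  replace (x + INR (S m)) with (x + 1 + INR m) by (rewrite S_INR; ring).
  change (INR 0) with 0. unfold Rdiv. ring.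
Qed.

Lemma rgamma_feq (z : Z) : rgamma (IZR z / 2) = IZR z / 2 * rgamma (IZR z / 2 + 1).
Proof.
  destruct (Z_le_gt_dec z 0) as [Hz|Hz].
  - apply rgamma_feq_nonpos. assert (IZR z <= 0) by (apply IZR_le; auto). lra.
  - assert (Hx : 0 < IZR z / 2) by (assert (0 < IZR z) by (apply IZR_lt; lia); lra).
    rewrite !rgamma_pos by lra.
    replace z with (Z.of_nat (S (Z.to_nat z - 1))) by lia.
    rewrite <- INR_IZR_INZ. rewrite Gamma_feq_half.
    destruct (Req_dec (Gamma_pos (INR (S (Z.to_nat z - 1)) / 2)) 0) as [E|E].
    + rewrite E, Rmult_0_r, Rinv_0. ring.
    + assert (0 < INR (S (Z.to_nat z - 1))) by (apply lt_0_INR; lia). field. split; auto. lra.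
Qed.

Lemma rgamma_1 : rgamma 1 = 1.
Proof.
  rewrite rgamma_pos by lra. rewrite (Gamma_pos_eq 1 1 Gamma1_is). apply Rinv_1.
Qed.

Lemma rgamma_half : rgamma (/ 2) = / sqrt PI.
Proof.
  rewrite rgamma_pos by lra. rewrite (Gamma_pos_eq _ (sqrt PI)). auto. apply Gamma_half_is.
Qed.

Set Bullet Behavior "Strict Subproofs".

Lemma RInt_add (f g : R -> R) a b : ex_RInt f a b -> ex_RInt g a b ->
  RInt (fun x => f x + g x) a b = RInt f a b + RInt g a b.
Proof.
  intros Hf Hg. etransitivity. apply (RInt_plus (V := R_CompleteNormedModule) f g a b Hf Hg). reflexivity.
Qed.

Lemma RInt_cmul (f : R -> R) c a b : ex_RInt f a b ->
  RInt (fun x => c * f x) a b = c * RInt f a b.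
Proof.
  intros Hf. etransitivity. apply (RInt_scal (V := R_CompleteNormedModule) f a b c Hf). reflexivity.
Qed.

Lemma ex_RInt_add (f g : R -> R) a b : ex_RInt f a b -> ex_RInt g a b -> ex_RInt (fun x => f x + g x) a b.
Proof. intros; apply (ex_RInt_plus (V := R_CompleteNormedModule)); auto. Qed.

Lemma ex_RInt_cmul (f : R -> R) c a b : ex_RInt f a b -> ex_RInt (fun x => c * f x) a b.
Proof. intros; apply (ex_RInt_scal (V := R_CompleteNormedModule)); auto. Qed.

Lemma RInt_extR (f g : R -> R) a b : (forall x, f x = g x) -> RInt f a b = RInt g a b.
Proof. intros H. apply RInt_ext. intros; apply H. Qed.

Definition Jf (a : nat) (k : R) : R := RInt (fun th => sin th ^ a * cos (k * th)) 0 PI.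

Lemma Jf_ex a k : ex_RInt (fun th => sin th ^ a * cos (k * th)) 0 PI.
Proof. apply exRc. intros; apply cont_of_der. auto_derive. auto. Qed.

Lemma Jf_rec a k : Jf (a + 2) k = / 2 * Jf a k + (- / 4) * (Jf a (k + 2) + Jf a (k - 2)).
Proof.
  unfold Jf.
  transitivity (RInt (fun th => / 2 * (sin th ^ a * cos (k * th)) + (- / 4) *
     ((sin th ^ a * cos ((k + 2) * th)) + (sin th ^ a * cos ((k - 2) * th)))) 0 PI).
  { apply RInt_extR. intros th.
    replace ((k + 2) * th) with (k * th + 2 * th) by ring.
    replace ((k - 2) * th) with (k * th - 2 * th) by ring.
    rewrite cos_plus, cos_minus, cos_2a_sin, pow_add. set (s := sin th ^ a). field. }
  rewrite RInt_add, !RInt_cmul, RInt_add; auto using Jf_ex, ex_RInt_cmul, ex_RInt_add.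
Qed.

Lemma Jf_neg a k : Jf a (- k) = Jf a k.
Proof.
  unfold Jf. apply RInt_extR. intros th. rewrite Ropp_mult_distr_l_reverse, cos_neg. auto.
Qed.

Lemma sin_int_PI (z : Z) : sin (IZR z * PI) = 0.
Proof. apply sin_eq_0_1. exists z. auto. Qed.

Lemma cos_2int_PI (z : Z) : cos (2 * IZR z * PI) = 1.
Proof.
  replace (2 * IZR z * PI) with (2 * (IZR z * PI)) by ring. rewrite cos_2a_sin, sin_int_PI. ring.
Qed.

Lemma Jf0_0 : Jf 0 0 = PI.
Proof.
  unfold Jf. rewrite (RInt_extR _ (fun _ => 1)).
  2:{ intros x; simpl. rewrite Rmult_0_l, cos_0. ring. }
  rewrite RInt_const. unfold scal; simpl; unfold mult; simpl. ring.
Qed.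

Lemma RInt_by_prim (f F : R -> R) a b v : (forall x, is_derive F x (f x)) ->
  (forall x, continuous f x) -> F b - F a = v -> RInt f a b = v.
Proof.
  intros H1 H2 H3. rewrite <- H3. apply (is_RInt_unique (V := R_CompleteNormedModule)).
  apply (is_RInt_derive (V := R_CompleteNormedModule) F f); auto.
Qed.

Lemma Jf0_nz (z : Z) : z <> 0%Z -> Jf 0 (2 * IZR z) = 0.
Proof.
  intros Hz. assert (Hk : 2 * IZR z <> 0) by (apply Rmult_integral_contrapositive; split; [lra | apply not_0_IZR; auto]).
  unfold Jf. apply (RInt_by_prim _ (fun th => sin (2 * IZR z * th) / (2 * IZR z))).
  - intro. auto_derive; auto. field. intro H; apply Hk; rewrite H; ring.
  - intro. apply cont_of_der. auto_derive. auto.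
  - rewrite Rmult_0_r, sin_0. replace (2 * IZR z * PI) with (IZR (2 * z) * PI) by (rewrite mult_IZR; ring).
    rewrite sin_int_PI. field. apply not_0_IZR; auto.
Qed.

Lemma odd_nz (z : Z) : IZR (1 + 2 * z) <> 0.
Proof. apply not_0_IZR. lia. Qed.

Lemma Jf1 (z : Z) : Jf 1 (2 * IZR z) = 2 / (1 - 4 * IZR z * IZR z).
Proof.
  set (k := 2 * IZR z).
  assert (H1 : 1 + k <> 0) by (unfold k; pose proof (odd_nz z); rewrite plus_IZR, mult_IZR in H; auto).
  assert (H2 : 1 - k <> 0) by (unfold k; pose proof (odd_nz (- z)); rewrite plus_IZR, mult_IZR, opp_IZR in H; lra).
  set (F := fun th => - cos ((1 + k) * th) / (2 * (1 + k)) - cos ((1 - k) * th) / (2 * (1 - k))).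
  unfold Jf. apply (RInt_by_prim _ F).
  - intros y. unfold F. auto_derive. auto.
    replace ((1 + k) * y) with (y + k * y) by ring. replace ((1 - k) * y) with (y - k * y) by ring.
    rewrite sin_plus, sin_minus. field. auto.
  - intro. apply cont_of_der. auto_derive. auto.
  - unfold F. rewrite !Rmult_0_r, cos_0.
    replace ((1 + k) * PI) with (PI + 2 * IZR z * PI) by (unfold k; ring).
    replace ((1 - k) * PI) with (PI + 2 * IZR (- z) * PI) by (unfold k; rewrite opp_IZR; ring).
    rewrite !cos_plus, !cos_2int_PI, cos_PI, sin_PI.
    replace (1 - 4 * IZR z * IZR z) with ((1 + k) * (1 - k)) by (unfold k; ring).
    field. auto.
Qed.

Definition sgn (v : Z) : R := (-1) ^ (Z.abs_nat v).

Lemma sgn_succ v : sgn (v + 1) = - sgn v.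
Proof.
  unfold sgn. destruct (Z_le_gt_dec 0 v).
  - replace (Z.abs_nat (v + 1)) with (S (Z.abs_nat v)) by lia. simpl. ring.
  - replace (Z.abs_nat v) with (S (Z.abs_nat (v + 1))) by lia. simpl. ring.
Qed.

Lemma sgn_pred v : sgn (v - 1) = - sgn v.
Proof. replace v with (v - 1 + 1)%Z at 2 by ring. rewrite sgn_succ. ring. Qed.

Lemma sgn_opp v : sgn (- v) = sgn v.
Proof. unfold sgn. f_equal. lia. Qed.

Definition Rf (a : nat) (v : Z) : R :=
  PI * INR (fact a) / 2 ^ a * sgn v *
  rgamma (INR a / 2 - IZR v + 1) * rgamma (INR a / 2 + IZR v + 1).

Lemma rg_feq' (x : R) (z : Z) : x = IZR z / 2 -> rgamma x = x * rgamma (x + 1).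
Proof. intros ->. apply rgamma_feq. Qed.

Ltac izr := rewrite ?plus_IZR, ?minus_IZR, ?mult_IZR, ?opp_IZR, <- ?INR_IZR_INZ; simpl; lra.
Ltac izr2 := rewrite ?Nat2Z.inj_succ, ?plus_IZR, ?minus_IZR, ?mult_IZR, ?opp_IZR, ?succ_IZR, ?plus_IZR, ?minus_IZR, ?mult_IZR, <- ?INR_IZR_INZ, ?S_INR; simpl; lra.

Lemma Rf_opp a v : Rf a (- v) = Rf a v.
Proof.
  unfold Rf. rewrite sgn_opp, opp_IZR.
  replace (INR a / 2 - - IZR v + 1) with (INR a / 2 + IZR v + 1) by ring.
  replace (INR a / 2 + - IZR v + 1) with (INR a / 2 - IZR v + 1) by ring. ring.
Qed.

Lemma Rf_rec a v : Rf (a + 2) v = / 2 * Rf a v + (- / 4) * (Rf a (v + 1) + Rf a (v - 1)).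
Proof.
  set (x := INR a / 2 - IZR v + 1). set (y := INR a / 2 + IZR v + 1).
  set (X := rgamma (x + 1)). set (Y := rgamma (y + 1)).
  assert (E1 : rgamma x = x * X).
  { apply (rg_feq' x (Z.of_nat a - 2 * v + 2)). unfold x. izr. }
  assert (E2 : rgamma y = y * Y).
  { apply (rg_feq' y (Z.of_nat a + 2 * v + 2)). unfold y. izr. }
  assert (E3 : rgamma (INR a / 2 - IZR (v + 1) + 1) = (x - 1) * x * X).
  { rewrite (rg_feq' _ (Z.of_nat a - 2 * v)). 2:{ izr. }
    replace (INR a / 2 - IZR (v + 1) + 1 + 1) with x by (unfold x; izr).
    rewrite E1. replace (INR a / 2 - IZR (v + 1) + 1) with (x - 1) by (unfold x; izr). ring. }
  assert (E4 : rgamma (INR a / 2 + IZR (v + 1) + 1) = Y).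
  { unfold Y. f_equal. unfold y. izr. }
  assert (E5 : rgamma (INR a / 2 - IZR (v - 1) + 1) = X).
  { unfold X. f_equal. unfold x. izr. }
  assert (E6 : rgamma (INR a / 2 + IZR (v - 1) + 1) = (y - 1) * y * Y).
  { rewrite (rg_feq' _ (Z.of_nat a + 2 * v)). 2:{ izr. }
    replace (INR a / 2 + IZR (v - 1) + 1 + 1) with y by (unfold y; izr).
    rewrite E2. replace (INR a / 2 + IZR (v - 1) + 1) with (y - 1) by (unfold y; izr). ring. }
  assert (E7 : rgamma (INR (a + 2) / 2 - IZR v + 1) = X).
  { unfold X. f_equal. unfold x. rewrite plus_INR. simpl. field. }
  assert (E8 : rgamma (INR (a + 2) / 2 + IZR v + 1) = Y).
  { unfold Y. f_equal. unfold y. rewrite plus_INR. simpl. field. }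
  unfold Rf. rewrite E3, E4, E5, E6, E7, E8, sgn_succ, sgn_pred.
  fold x. fold y. rewrite E1, E2.
  replace (a + 2)%nat with (S (S a)) by lia.
  rewrite !fact_simpl, !mult_INR, !S_INR.
  assert (Hxy : x + y = INR a + 2) by (unfold x, y; field).
  simpl. replace y with (INR a + 2 - x) by lra.
  field. apply pow_nonzero. lra.
Qed.

Lemma rg_negint n : rgamma (- INR n) = 0.
Proof.
  induction n.
  - rewrite (rg_feq' _ 0). 2:{ simpl. field. } simpl. ring.
  - rewrite (rg_feq' _ (- 2 * Z.of_nat (S n))). 2:{ izr2. }
    replace (- INR (S n) + 1) with (- INR n) by (rewrite S_INR; ring). rewrite IHn. ring.
Qed.

Lemma Rf0_0 : Rf 0 0 = PI.
Proof.
  unfold Rf. simpl. replace (0 / 2 - 0 + 1) with 1 by field. replace (0 / 2 + 0 + 1) with 1 by field.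
  rewrite rgamma_1. unfold sgn. simpl. field.
Qed.

Lemma Rf0_nz v : v <> 0%Z -> Rf 0 v = 0.
Proof.
  intros Hv. unfold Rf. destruct (Z_le_gt_dec 0 v).
  - replace (INR 0 / 2 - IZR v + 1) with (- INR (Z.to_nat (v - 1))).
    + rewrite rg_negint. ring.
    + rewrite INR_IZR_INZ, Z2Nat.id by lia. rewrite minus_IZR. simpl. field.
  - replace (INR 0 / 2 + IZR v + 1) with (- INR (Z.to_nat (- v - 1))).
    + rewrite rg_negint. ring.
    + rewrite INR_IZR_INZ, Z2Nat.id by lia. rewrite minus_IZR, opp_IZR. simpl. field.
Qed.

Lemma sqrtPI_sq : sqrt PI * sqrt PI = PI.
Proof. apply sqrt_sqrt. pose proof PI_RGT_0; lra. Qed.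

Lemma sqrtPI_pos : 0 < sqrt PI.
Proof. apply sqrt_lt_R0. apply PI_RGT_0. Qed.

Lemma Rf1_nat n : Rf 1 (Z.of_nat n) = 2 / (1 - 4 * INR n * INR n).
Proof.
  induction n.
  - unfold Rf. simpl. unfold sgn. simpl.
    replace (1 / 2 - 0 + 1) with (/ 2 + 1) by field. replace (1 / 2 + 0 + 1) with (/ 2 + 1) by field.
    assert (E : rgamma (/ 2) = / 2 * rgamma (/ 2 + 1)) by (apply (rg_feq' _ 1); field).
    rewrite rgamma_half in E.
    assert (E' : rgamma (/ 2 + 1) = 2 / sqrt PI).
    { pose proof sqrtPI_pos. apply (Rmult_eq_reg_l (/ 2)). rewrite <- E. field. lra. lra. }
    rewrite E'. pose proof sqrtPI_pos. pose proof sqrtPI_sq.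
    set (s := sqrt PI) in *. rewrite <- H0. field. lra.
  - set (x := INR 1 / 2 - IZR (Z.of_nat n) + 1). set (y := INR 1 / 2 + IZR (Z.of_nat n) + 1).
    assert (Ex : rgamma (INR 1 / 2 - IZR (Z.of_nat (S n)) + 1) = (x - 1) * rgamma x).
    { rewrite (rg_feq' _ (1 - 2 * Z.of_nat n)). 2:{ izr2. } f_equal.
      - unfold x. rewrite Nat2Z.inj_succ, succ_IZR. ring.
      - f_equal. unfold x. rewrite Nat2Z.inj_succ, succ_IZR. ring. }
    assert (Ey : rgamma y = y * rgamma (INR 1 / 2 + IZR (Z.of_nat (S n)) + 1)).
    { rewrite (rg_feq' _ (3 + 2 * Z.of_nat n)). 2:{ unfold y; izr2. } f_equal.
      f_equal. unfold y. rewrite Nat2Z.inj_succ, succ_IZR. ring. }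
    unfold Rf in *. rewrite Ex. fold x y in IHn. rewrite Ey in IHn.
    rewrite Nat2Z.inj_succ, <- Z.add_1_r, sgn_succ. rewrite Nat2Z.inj_succ, <- Z.add_1_r in IHn.
    assert (Hn0 : 0 <= INR n) by apply pos_INR.
    assert (Hn1 : 1 - 4 * INR n * INR n <> 0).
    { destruct n. simpl; lra. pose proof (S_INR n). pose proof (pos_INR n). nra. }
    assert (Hn2 : 1 - 4 * INR (S n) * INR (S n) <> 0).
    { pose proof (S_INR n). nra. }
    assert (Hy : y <> 0) by (unfold y; rewrite <- INR_IZR_INZ; simpl; lra).
    set (c := PI * INR (fact 1) / 2 ^ 1 * sgn (Z.of_nat n) * rgamma x *
              rgamma (INR 1 / 2 + IZR (Z.of_nat n + 1) + 1)).
    assert (IH' : c * y = 2 / (1 - 4 * INR n * INR n)) by (rewrite <- IHn; unfold c; ring).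
    transitivity (- (x - 1) * c). { unfold c; ring. }
    assert (Hc : c = 2 / (1 - 4 * INR n * INR n) / y) by (rewrite <- IH'; field; auto).
    rewrite Hc. unfold x, y in *. rewrite <- INR_IZR_INZ in *. rewrite (S_INR n) in *.
    change (INR 1) with 1 in *.
    field. split; [auto | split; [auto | lra]].
Qed.

Lemma Rf1 v : Rf 1 v = 2 / (1 - 4 * IZR v * IZR v).
Proof.
  destruct (Z_le_gt_dec 0 v).
  - replace v with (Z.of_nat (Z.to_nat v)) by lia. rewrite Rf1_nat, <- INR_IZR_INZ. auto.
  - rewrite <- Rf_opp. replace (- v)%Z with (Z.of_nat (Z.to_nat (- v))) by lia.
    rewrite Rf1_nat, INR_IZR_INZ, Z2Nat.id by lia. rewrite opp_IZR. f_equal. ring_simplify. auto.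
Qed.

Lemma JR_all a : (forall v, Jf a (2 * IZR v) = Rf a v) /\ (forall v, Jf (S a) (2 * IZR v) = Rf (S a) v).
Proof.
  induction a.
  - split.
    + intros v. destruct (Z.eq_dec v 0) as [->|Hv].
      * rewrite Rmult_0_r, Jf0_0, Rf0_0. auto.
      * rewrite Jf0_nz, Rf0_nz; auto.
    + intros v. rewrite Jf1, Rf1; auto.
  - destruct IHa as [H1 H2]. split; [exact H2|].
    intros v. replace (S (S a)) with (a + 2)%nat by lia.
    rewrite Jf_rec, Rf_rec, <- !H1.
    replace (2 * IZR v + 2) with (2 * IZR (v + 1)) by (rewrite plus_IZR; ring).
    replace (2 * IZR v - 2) with (2 * IZR (v - 1)) by (rewrite minus_IZR; ring). auto.
Qed.

Lemma JR a v : Jf a (2 * IZR v) = Rf a v.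
Proof. exact (proj1 (JR_all a) v). Qed.

Lemma eps_sum M (f : nat -> R) : (1 <= M)%nat ->
  sum_f_R0 (fun u => eps M u * f u) M = sum_f_R0 f M - f 0%nat / 2 - f M / 2.
Proof.
  intros HM. destruct M as [|m]; [lia|].
  assert (Hpre : forall m', (m' <= m)%nat ->
    sum_f_R0 (fun u => eps (S m) u * f u) m' = sum_f_R0 f m' - f 0%nat / 2).
  { induction m'; intros Hm'.
    - simpl. unfold eps. simpl. field.
    - rewrite !tech5, IHm' by lia. unfold eps.
      replace (Nat.eqb (S m') 0) with false by auto.
      replace (Nat.eqb (S m') (S m)) with false by (symmetry; apply Nat.eqb_neq; lia).
      simpl. ring. }
  rewrite !tech5, Hpre by lia. unfold eps.
  replace (Nat.eqb (S m) (S m)) with true by (symmetry; apply Nat.eqb_eq; lia).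
  rewrite Bool.orb_true_r. field.
Qed.

Definition TT (M : nat) (r : R) : R :=
  sum_f_R0 (fun u => eps M u * cos (r * INR u * PI / INR M)) M.

Lemma TT_neg M r : TT M (- r) = TT M r.
Proof.
  unfold TT. apply sum_eq. intros i _. f_equal.
  replace (- r * INR i * PI / INR M) with (- (r * INR i * PI / INR M)) by (unfold Rdiv; ring).
  apply cos_neg.
Qed.

Lemma sum_ones N : sum_f_R0 (fun _ => 1) N = INR (S N).
Proof. rewrite sum_cte. ring. Qed.

Lemma TT_0 M : (1 <= M)%nat -> TT M 0 = INR M.
Proof.
  intros HM. unfold TT.
  rewrite (sum_eq _ (fun u => eps M u * (fun _ => 1) u)).
  2:{ intros i _. replace (0 * INR i * PI / INR M) with 0 by (unfold Rdiv; ring). rewrite cos_0. auto. }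
  rewrite eps_sum by auto. rewrite sum_ones, S_INR. field.
Qed.

Lemma TT_2M M : (1 <= M)%nat -> TT M (2 * INR M) = INR M.
Proof.
  intros HM. assert (HM0 : INR M <> 0) by (apply not_0_INR; lia). unfold TT.
  rewrite (sum_eq _ (fun u => eps M u * (fun _ => 1) u)).
  2:{ intros i _. replace (2 * INR M * INR i * PI / INR M) with (0 + 2 * INR i * PI) by (field; auto).
      rewrite cos_period, cos_0. auto. }
  rewrite eps_sum by auto. rewrite sum_ones, S_INR. field.
Qed.

Lemma telescope x N : 2 * sin (x / 2) * sum_f_R0 (fun u => cos (INR u * x)) N =
  sin ((INR N + / 2) * x) + sin (x / 2).
Proof.
  induction N.
  - simpl. rewrite Rmult_0_l, cos_0. replace ((0 + / 2) * x) with (x / 2) by field. ring.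
  - rewrite tech5, Rmult_plus_distr_l, IHN.
    replace ((INR N + / 2) * x) with (INR (S N) * x - x / 2) by (rewrite S_INR; field).
    replace ((INR (S N) + / 2) * x) with (INR (S N) * x + x / 2) by field.
    rewrite sin_minus, sin_plus. ring.
Qed.

Lemma TT_int M (z : Z) : (1 <= M)%nat -> (0 < z)%Z -> (z < 2 * Z.of_nat M)%Z -> TT M (IZR z) = 0.
Proof.
  intros HM Hz1 Hz2.
  assert (HM0 : 0 < INR M) by (apply lt_0_INR; lia).
  set (x := IZR z * PI / INR M).
  assert (Hs : 0 < sin (x / 2)).
  { apply sin_gt_0.
    - unfold x. pose proof PI_RGT_0. assert (0 < IZR z) by (apply IZR_lt; auto).
      apply Rdiv_lt_0_compat; [|lra]. apply Rdiv_lt_0_compat; [|lra]. nra.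
    - unfold x. assert (IZR z < 2 * INR M).
      { rewrite INR_IZR_INZ. replace 2 with (IZR 2) by auto. rewrite <- mult_IZR. apply IZR_lt. lia. }
      pose proof PI_RGT_0. apply (Rmult_lt_reg_r (2 * INR M)). lra.
      replace (IZR z * PI / INR M / 2 * (2 * INR M)) with (IZR z * PI) by (field; lra).
      nra. }
  unfold TT. rewrite (sum_eq _ (fun u => eps M u * (fun u => cos (INR u * x)) u)).
  2:{ intros i _. f_equal. f_equal. unfold x. field. lra. }
  rewrite eps_sum by auto.
  apply (Rmult_eq_reg_l (2 * sin (x / 2))); [|lra].
  rewrite Rmult_0_r.
  replace (2 * sin (x / 2) * (sum_f_R0 (fun u => cos (INR u * x)) M - cos (INR 0 * x) / 2 - cos (INR M * x) / 2))
    with (2 * sin (x / 2) * sum_f_R0 (fun u => cos (INR u * x)) M - sin (x / 2) * cos (INR 0 * x) - sin (x / 2) * cos (INR M * x)) by field.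
  rewrite telescope.
  replace ((INR M + / 2) * x) with (INR M * x + x / 2) by field.
  replace (INR M * x) with (IZR z * PI) by (unfold x; field; lra).
  rewrite sin_plus, sin_int_PI. change (INR 0) with 0. rewrite (Rmult_0_l x), cos_0. ring.
Qed.

Lemma TT_nat M n : (1 <= M)%nat -> (0 < n < 2 * M)%nat -> TT M (INR n) = 0.
Proof.
  intros HM Hn. rewrite INR_IZR_INZ. apply TT_int; lia.
Qed.

Lemma orth M p q : (1 <= M)%nat -> (p <= M)%nat -> (q <= M)%nat ->
  eps M p * sum_f_R0 (fun u => eps M u * (cos (INR p * INR u * PI / INR M) * cos (INR q * INR u * PI / INR M))) M
  = if Nat.eqb p q then INR M / 2 else 0.
Proof.
  intros HM Hp Hq.
  assert (HM0 : INR M <> 0) by (apply not_0_INR; lia).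
  assert (E : sum_f_R0 (fun u => eps M u * (cos (INR p * INR u * PI / INR M) * cos (INR q * INR u * PI / INR M))) M
      = / 2 * (TT M (INR p + INR q) + TT M (INR p - INR q))).
  { unfold TT. rewrite <- sum_plus, scal_sum. apply sum_eq. intros i _.
    replace ((INR p + INR q) * INR i * PI / INR M) with (INR p * INR i * PI / INR M + INR q * INR i * PI / INR M) by (field; auto).
    replace ((INR p - INR q) * INR i * PI / INR M) with (INR p * INR i * PI / INR M - INR q * INR i * PI / INR M) by (field; auto).
    rewrite cos_plus, cos_minus. field. }
  rewrite E. destruct (Nat.eq_dec p q) as [<-|Hpq].
  - rewrite Nat.eqb_refl. rewrite Rminus_diag, TT_0 by auto.
    destruct (Nat.eq_dec p 0) as [->|Hp0].
    + change (INR 0) with 0. rewrite Rplus_0_r, TT_0 by auto. unfold eps. simpl. field.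
    + destruct (Nat.eq_dec p M) as [->|HpM].
      * replace (INR M + INR M) with (2 * INR M) by ring. rewrite TT_2M by auto.
        unfold eps. rewrite Nat.eqb_refl, Bool.orb_true_r. field.
      * rewrite <- plus_INR, TT_nat by lia. unfold eps.
        replace (Nat.eqb p 0) with false by (symmetry; apply Nat.eqb_neq; auto).
        replace (Nat.eqb p M) with false by (symmetry; apply Nat.eqb_neq; auto). simpl. field.
  - replace (Nat.eqb p q) with false by (symmetry; apply Nat.eqb_neq; auto).
    rewrite <- plus_INR, TT_nat by lia.
    destruct (le_lt_dec q p).
    + rewrite <- minus_INR, TT_nat by lia. ring.
    + replace (INR p - INR q) with (- INR (q - p)) by (rewrite minus_INR by lia; ring).
      rewrite TT_neg, TT_nat by lia. ring.
Qed.

Lemma sum_swap (F : nat -> nat -> R) N K :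
  sum_f_R0 (fun u => sum_f_R0 (fun m => F u m) K) N = sum_f_R0 (fun m => sum_f_R0 (fun u => F u m) N) K.
Proof.
  induction N.
  - simpl. apply sum_eq. intros; simpl. auto.
  - rewrite tech5, IHN, <- sum_plus. apply sum_eq. intros i _. rewrite tech5. auto.
Qed.

Lemma sum_zero (g : nat -> R) N : (forall i, (i <= N)%nat -> g i = 0) -> sum_f_R0 g N = 0.
Proof.
  intros H. induction N.
  - simpl. apply H. lia.
  - rewrite tech5, IHN, (H (S N)); [ring | lia | intros; apply H; lia].
Qed.

Lemma sum_delta (g : nat -> R) N v : (v <= N)%nat -> (forall i, (i <= N)%nat -> i <> v -> g i = 0) ->
  sum_f_R0 g N = g v.
Proof.
  intros Hv H. induction N.
  - replace v with 0%nat by lia. auto.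
  - destruct (Nat.eq_dec v (S N)) as [->|Hne].
    + rewrite tech5, sum_zero; [ring | intros; apply H; lia].
    + rewrite tech5, IHN, (H (S N)); [ring | lia | lia | lia | intros; apply H; lia].
Qed.

Definition Kc (M a : nat) : R := PI * INR (fact a) / (powerRZ 2 (Z.of_nat a - 1) * INR M).
Definition rgp (a m : nat) : R := rgamma (INR a / 2 - INR m + 1) * rgamma (INR a / 2 + INR m + 1).

Lemma Qcos M a j : (1 <= M)%nat -> (j <= M)%nat ->
  sum_f_R0 (fun u => chi M a u * cos (INR j * (INR u * PI / INR M))) M =
  Kc M a * sum_f_R0 (fun m => (-1) ^ m * rgp a m * (if Nat.eqb (2 * m) j then INR M / 2 else 0)) (Nat.div M 2).
Proof.
  intros HM Hj.
  set (F := fun u m => Kc M a * (eps M (2 * m) * (-1) ^ m * rgp a m) *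
     (eps M u * (cos (INR (2 * m) * INR u * PI / INR M) * cos (INR j * INR u * PI / INR M)))).
  transitivity (sum_f_R0 (fun u => sum_f_R0 (fun m => F u m) (Nat.div M 2)) M).
  { apply sum_eq. intros u _. unfold chi, omega. fold (Kc M a).
    rewrite (sum_eq (fun m => F u m) (fun m =>
      (eps M (2 * m) * (-1) ^ m * cos (INR (2 * m * u) * PI / INR M) *
       rgamma (INR a / 2 - INR m + 1) * rgamma (INR a / 2 + INR m + 1)) *
      (eps M u * Kc M a * cos (INR j * (INR u * PI / INR M))))).
    2:{ intros m _. unfold F, rgp. rewrite (mult_INR (2 * m) u).
        replace (INR j * INR u * PI / INR M) with (INR j * (INR u * PI / INR M)) by (unfold Rdiv; ring).
        ring. }
    rewrite <- scal_sum. ring. }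
  rewrite sum_swap, scal_sum. apply sum_eq. intros m Hm.
  assert (H2m : (2 * m <= M)%nat).
  { assert (m <= Nat.div M 2)%nat by auto. pose proof (Nat.Div0.mul_div_le M 2). lia. }
  pose proof (orth M (2 * m) j HM H2m Hj) as Ho.
  rewrite (sum_eq (fun u => F u m) (fun u =>
     (eps M u * (cos (INR (2 * m) * INR u * PI / INR M) * cos (INR j * INR u * PI / INR M))) *
     (eps M (2 * m) * (Kc M a * ((-1) ^ m * rgp a m))))).
  2:{ intros u _. unfold F. ring. }
  rewrite <- scal_sum. rewrite <- Ho. ring.
Qed.

Lemma Jodd a n : RInt (fun th => cos (INR (2 * n + 1) * th) * sin th ^ a) 0 PI = 0.
Proof.
  set (f := fun th => cos (INR (2 * n + 1) * th) * sin th ^ a).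
  assert (Hex : forall b c, ex_RInt f b c).
  { intros; apply exRc. intros; apply cont_of_der. unfold f. auto_derive. auto. }
  assert (E1 : RInt (fun y => scal (-1) (f (-1 * y + PI))) 0 PI = RInt f (-1 * 0 + PI) (-1 * PI + PI)).
  { apply (RInt_comp_lin (V := R_CompleteNormedModule)). apply Hex. }
  assert (E2 : RInt (fun y => scal (-1) (f (-1 * y + PI))) 0 PI = RInt f 0 PI).
  { apply RInt_extR. intros y. unfold scal; simpl; unfold mult; simpl. unfold f.
    replace (-1 * y + PI) with (PI - y) by ring. rewrite sin_PI_x.
    replace (INR (2 * n + 1) * (PI - y)) with (IZR (Z.of_nat (2 * n + 1)) * PI - INR (2 * n + 1) * y)
      by (rewrite <- INR_IZR_INZ; ring).
    rewrite cos_minus, sin_int_PI.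
    replace (IZR (Z.of_nat (2 * n + 1)) * PI) with (2 * IZR (Z.of_nat n) * PI + PI)
      by (rewrite <- !INR_IZR_INZ, plus_INR, mult_INR; simpl; ring).
    rewrite cos_plus, cos_2int_PI, cos_PI, sin_PI. ring. }
  assert (E3 : RInt f PI 0 = - RInt f 0 PI).
  { symmetry. etransitivity. 2: apply (opp_RInt_swap (V := R_CompleteNormedModule)); apply Hex. reflexivity. }
  replace (-1 * 0 + PI) with PI in E1 by ring. replace (-1 * PI + PI) with 0 in E1 by ring.
  rewrite E2, E3 in E1. fold f. lra.
Qed.

Lemma powerRZ_half a : powerRZ 2 (Z.of_nat a - 1) * 2 = 2 ^ a.
Proof.
  rewrite pow_powerRZ. replace (Z.of_nat a) with ((Z.of_nat a - 1) + 1)%Z at 2 by ring.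
  rewrite powerRZ_add by lra. simpl. ring.
Qed.

Lemma LQ_cos M a j : (1 <= M)%nat -> (j <= M)%nat ->
  RInt (fun th => cos (INR j * th) * sin th ^ a) 0 PI =
  sum_f_R0 (fun u => chi M a u * cos (INR j * (INR u * PI / INR M))) M.
Proof.
  intros HM Hj. match goal with |- ?x = ?y => change (@eq R x y) end. rewrite Qcos by auto.
  destruct (Nat.Even_or_Odd j) as [[n Hn]|[n Hn]]; subst j.
  - rewrite (sum_delta _ _ n).
    + rewrite Nat.eqb_refl.
      transitivity (Jf a (2 * IZR (Z.of_nat n))).
      { unfold Jf. apply RInt_extR. intros th. rewrite mult_INR, (INR_IZR_INZ n). change (INR 2) with 2. apply Rmult_comm. }
      rewrite JR. unfold Rf, Kc, rgp, sgn. rewrite Zabs2Nat.id, <- INR_IZR_INZ.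
      assert (HM0 : INR M <> 0) by (apply not_0_INR; lia).
      rewrite <- (powerRZ_half a).
      assert (HP : powerRZ 2 (Z.of_nat a - 1) <> 0) by (apply powerRZ_NOR; lra).
      set (s := (-1) ^ n). set (P := powerRZ 2 (Z.of_nat a - 1)).
      field. split; auto.
    + assert (2 * n <= M)%nat by auto. apply Nat.div_le_lower_bound; lia.
    + intros i _ Hi. replace (Nat.eqb (2 * i) (2 * n)) with false by (symmetry; apply Nat.eqb_neq; lia). ring.
  - rewrite Jodd, sum_zero. ring.
    intros i _. replace (Nat.eqb (2 * i) (2 * n + 1)) with false by (symmetry; apply Nat.eqb_neq; lia). ring.
Qed.

Definition Lf (a : nat) (g : R -> R) : R := RInt (fun th => g th * sin th ^ a) 0 PI.
Definition Qf (M a : nat) (g : R -> R) : R := sum_f_R0 (fun u => chi M a u * g (INR u * PI / INR M)) M.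

Lemma ex_cc a k j : ex_RInt (fun th => (cos th ^ k * cos (INR j * th)) * sin th ^ a) 0 PI.
Proof. apply exRc. intros; apply cont_of_der. auto_derive. auto. Qed.

Lemma Lf_lin a c1 c2 g1 g2 :
  ex_RInt (fun th => g1 th * sin th ^ a) 0 PI -> ex_RInt (fun th => g2 th * sin th ^ a) 0 PI ->
  Lf a (fun th => c1 * g1 th + c2 * g2 th) = c1 * Lf a g1 + c2 * Lf a g2.
Proof.
  intros H1 H2. unfold Lf.
  rewrite (RInt_extR _ (fun th => c1 * (g1 th * sin th ^ a) + c2 * (g2 th * sin th ^ a))).
  2:{ intros th. set (s := sin th ^ a). ring. }
  rewrite RInt_add, !RInt_cmul; auto using ex_RInt_cmul.
Qed.

Lemma Qf_lin M a c1 c2 g1 g2 :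
  Qf M a (fun th => c1 * g1 th + c2 * g2 th) = c1 * Qf M a g1 + c2 * Qf M a g2.
Proof.
  unfold Qf. rewrite !scal_sum, <- sum_plus. apply sum_eq. intros; ring.
Qed.

Lemma Lf_ext a g1 g2 : (forall th, g1 th = g2 th) -> Lf a g1 = Lf a g2.
Proof. intros H. unfold Lf. apply RInt_extR. intros; rewrite H; auto. Qed.

Lemma Qf_ext M a g1 g2 : (forall th, g1 th = g2 th) -> Qf M a g1 = Qf M a g2.
Proof. intros H. unfold Qf. apply sum_eq. intros; rewrite H; auto. Qed.

Lemma claim M a k : (1 <= M)%nat -> forall j, (j + k <= M)%nat ->
  Lf a (fun th => cos th ^ k * cos (INR j * th)) = Qf M a (fun th => cos th ^ k * cos (INR j * th)).
Proof.
  intros HM. induction k; intros j Hj.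
  - rewrite (Lf_ext _ _ (fun th => cos (INR j * th))) by (intros; simpl; ring).
    rewrite (Qf_ext _ _ _ (fun th => cos (INR j * th))) by (intros; simpl; ring).
    unfold Lf, Qf. apply LQ_cos; auto. lia.
  - destruct j as [|j'].
    + assert (E : forall th, cos th ^ S k * cos (INR 0 * th) = cos th ^ k * cos (INR 1 * th)).
      { intros th. change (INR 0) with 0. change (INR 1) with 1. rewrite Rmult_0_l, cos_0, Rmult_1_l.
        simpl. set (c := cos th ^ k). ring. }
      rewrite (Lf_ext _ _ _ E), (Qf_ext _ _ _ _ E). apply IHk. lia.
    + assert (E : forall th, cos th ^ S k * cos (INR (S j') * th) =
         / 2 * (cos th ^ k * cos (INR (S (S j')) * th)) + / 2 * (cos th ^ k * cos (INR j' * th))).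
      { intros th. rewrite (S_INR (S j')). rewrite (S_INR j').
        replace ((INR j' + 1 + 1) * th) with ((INR j' + 1) * th + th) by ring.
        replace (INR j' * th) with ((INR j' + 1) * th - th) by ring.
        rewrite cos_plus, cos_minus. simpl. set (c := cos th ^ k). field. }
      rewrite (Lf_ext _ _ _ E), (Qf_ext _ _ _ _ E).
      rewrite Lf_lin, Qf_lin by apply ex_cc.
      rewrite !IHk by lia. auto.
Qed.

Lemma isR_add (f g : R -> R) a b lf lg : is_RInt f a b lf -> is_RInt g a b lg ->
  is_RInt (fun x => f x + g x) a b (lf + lg).
Proof. intros; apply (is_RInt_plus (V := R_NormedModule)); auto. Qed.

Lemma isR_cmul (f : R -> R) c a b lf : is_RInt f a b lf -> is_RInt (fun x => c * f x) a b (c * lf).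
Proof. intros; apply (is_RInt_scal (V := R_NormedModule)); auto. Qed.

Lemma isR_ext (f g : R -> R) a b l : (forall x, f x = g x) -> is_RInt f a b l -> is_RInt g a b l.
Proof. intros H; apply is_RInt_ext. intros; apply H. Qed.

Lemma poly_int (c : nat -> R) a N :
  is_RInt (fun th => sum_f_R0 (fun k => c k * cos th ^ k) N * sin th ^ a) 0 PI
    (sum_f_R0 (fun k => c k * Lf a (fun th => cos th ^ k)) N).
Proof.
  assert (Hk : forall k, is_RInt (fun th => cos th ^ k * sin th ^ a) 0 PI (Lf a (fun th => cos th ^ k))).
  { intros k. unfold Lf. apply (RInt_correct (V := R_CompleteNormedModule)).
    apply exRc. intros; apply cont_of_der. auto_derive. auto. }
  induction N.
  - simpl. eapply isR_ext; [| apply (isR_cmul (fun th => cos th ^ 0 * sin th ^ a) (c 0%nat)), Hk].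
    intros x. simpl. ring.
  - rewrite tech5. eapply isR_ext; [| apply isR_add; [apply IHN | apply (isR_cmul (fun th => cos th ^ S N * sin th ^ a) (c (S N))), Hk]].
    intros x. rewrite tech5. set (s := sin x ^ a). set (p := cos x ^ S N). ring.
Qed.

Theorem lemma1 (M alpha : nat) (a : nat -> R) :
  (1 <= M)%nat ->
  RInt (fun th => poly_eval a M (cos th) * sin th ^ alpha) 0 PI =
  sum_f_R0 (fun u => chi M alpha u * poly_eval a M (cos (INR u * PI / INR M))) M.
Proof.
  intros HM. unfold poly_eval.
  rewrite (is_RInt_unique (V := R_CompleteNormedModule) _ _ _ _ (poly_int a alpha M)).
  transitivity (sum_f_R0 (fun k => a k * Qf M alpha (fun th => cos th ^ k)) M).
  { apply sum_eq. intros k Hk. f_equal.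
    assert (E : forall th, cos th ^ k = cos th ^ k * cos (INR 0 * th)).
    { intros th. change (INR 0) with 0. rewrite Rmult_0_l, cos_0. ring. }
    rewrite (Lf_ext _ _ _ E), (Qf_ext _ _ _ _ E). apply claim; auto; lia. }
  unfold Qf. symmetry.
  rewrite (sum_eq _ (fun u => sum_f_R0 (fun k => a k * (chi M alpha u * cos (INR u * PI / INR M) ^ k)) M)).
  2:{ intros u _. rewrite scal_sum. apply sum_eq. intros; ring. }
  rewrite sum_swap. apply sum_eq. intros k _. rewrite scal_sum. apply sum_eq. intros; ring.
Qed.
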